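(* Let $s$ be a Sturmian word and let $w$ be a non-empty factor of $s$. If $w$ is right special, then $r_s(w)$ equals the first letter of $w$. If $w$ is left special, then $r_s(w)$ equals the last letter of $w$.
   Context: A Sturmian word is an infinite word $s\in\{a,b\}^{\omega}$ that is aperiodic (not ultimately periodic) and balanced: for all factors $u,v$ of $s$ with $|u|=|v|$ one has $||u|_x-|v|_x|\le 1$ for $x\in\{a,b\}$, where $|u|_x$ is the number of occurrences of the letter $x$ in $u$. $\mathcal F^+ s$ denotes the set of non-empty factors of $s$. A non-empty factor $w$ of $s$ is rich in the letter $z\in\{a,b\}$ if there is a factor $v$ of $s$ with $|v|=|w|$ and $|w|_z>|v|_z$; every non-empty factor of a Sturmian word is rich in exactly one of the letters $a,b$, and $r_s:\mathcal F^+ s\to\{a,b\}$ maps $w$ to the letter in which $w$ is rich. A factor $u$ is right special (resp. left special) if there are distinct letters $x,y$ with $ux,uy$ (resp. $xu,yu$) factors of $s$. *)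

(* Defs.v *)
From HB Require Import structures.
From mathcomp Require Import all_boot.
Set Implicit Arguments. Unset Strict Implicit. Unset Printing Implicit Defensive.

Inductive letter := a | b.

Definition letter_eqb (x y : letter) : bool :=
  match x, y with a, a | b, b => true | _, _ => false end.
Lemma letter_eqP : Equality.axiom letter_eqb.
Proof. by case; case; constructor. Qed.
HB.instance Definition _ := hasDecEq.Build letter letter_eqP.

Definition infword := nat -> letter.

Definition factor (s : infword) (u : seq letter) : Prop :=
  exists i, u = mkseq (fun j => s (i + j)) (size u).

Definition occ (x : letter) (u : seq letter) : nat := count_mem x u.

Definition balanced (s : infword) : Prop :=
  forall u v, factor s u -> factor s v -> size u = size v ->
    forall x, occ x u <= occ x v + 1 /\ occ x v <= occ x u + 1.

Definition ultimately_periodic (s : infword) : Prop :=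
  exists p n0, 0 < p /\ forall n, n0 <= n -> s (n + p) = s n.

Definition sturmian (s : infword) : Prop :=
  ~ ultimately_periodic s /\ balanced s.

Definition rich (s : infword) (w : seq letter) (z : letter) : Prop :=
  exists v, factor s v /\ size v = size w /\ occ z v < occ z w.

Definition right_special (s : infword) (u : seq letter) : Prop :=
  exists x y, x <> y /\ factor s (rcons u x) /\ factor s (rcons u y).

Definition left_special (s : infword) (u : seq letter) : Prop :=
  exists x y, x <> y /\ factor s (x :: u) /\ factor s (y :: u).

(* Main.v *)
Require Import Defs.
From mathcomp Require Import all_boot.
From mathcomp Require Import zify.

Lemma factorP (s : infword) u :
  factor s u <-> exists i, forall j, j < size u -> nth a u j = s (i + j).
Proof.
split=> [[i ->]|[i H]]; exists i.
  by move=> j; rewrite size_mkseq => Hj; rewrite nth_mkseq.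
apply: (@eq_from_nth _ a); rewrite ?size_mkseq // => j Hj.
by rewrite nth_mkseq // H.
Qed.

Lemma factor_catl s u v : factor s (u ++ v) -> factor s u.
Proof.
move/factorP=> [i H]; apply/factorP; exists i => j Hj.
rewrite -H ?nth_cat ?Hj // size_cat; exact: leq_trans Hj (leq_addr _ _).
Qed.

Lemma factor_catr s u v : factor s (u ++ v) -> factor s v.
Proof.
move/factorP=> [i H]; apply/factorP; exists (i + size u) => j Hj.
have := H (size u + j); rewrite nth_cat size_cat ltn_add2l Hj.
rewrite ltnNge leq_addr /= addKn addnA [i + _]addnC; exact.
Qed.

Lemma occ_ab u : occ a u + occ b u = size u.
Proof. by elim: u => //= x u IH; case: x; rewrite /occ /= -IH ?addnS ?addSn. Qed.

Lemma core s w c v0 : balanced s -> factor s w -> factor s v0 ->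
  size v0 = size w -> (occ c v0).+1 = occ c w ->
  forall z, rich s w z <-> z = c.
Proof.
move=> Hb Hw Hv0 Hs Ho z; split; last first.
  by move=> ->; exists v0; rewrite Ho.
move=> [v [Hv [Hsv Hlt]]].
case: (z =P c) => // Hzc; exfalso.
have [H1 _] := Hb v v0 Hv Hv0 (etrans Hsv (esym Hs)) c.
have E1 := occ_ab v; have E2 := occ_ab w.
move: Hzc Hlt H1 Ho; case: z; case: c => //= _; rewrite -Hsv in E2; lia.
Qed.

Lemma occ_neq c d u : d <> c -> occ c (rcons u d) = occ c u.
Proof.
move=> H; rewrite /occ -cats1 count_cat /=.
have -> : (d == c) = false by apply/eqP.
by rewrite !addn0.
Qed.

Lemma occ_neq' c d u : d <> c -> occ c (d :: u) = occ c u.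
Proof. by move=> H; rewrite /occ /=; have -> : (d == c) = false by apply/eqP. Qed.

Lemma other (x y c : letter) : x <> y -> exists d, d <> c /\ (d = x \/ d = y).
Proof.
case: x; case: y; case: c => // H;
  first [exists a; split; [by []|by [left|right]] | exists b; split; [by []|by [left|right]]].
Qed.

Theorem mainTheorem1 (s : infword) (w : seq letter) :
  sturmian s -> factor s w -> w <> [::] ->
  (right_special s w -> forall z, rich s w z <-> z = head a w) /\
  (left_special s w -> forall z, rich s w z <-> z = last a w).
Proof.
move=> [_ Hb] Hw Hne; split.
  move=> [x [y [Hxy [Fx Fy]]]].
  case: w Hw Hne Fx Fy => [//|c w'] Hw _ Fx Fy /=.
  have [d [Hdc Hd]] := @other x y c Hxy.
  have Fd : factor s (rcons w' d).
    by case: Hd => ->; [move: Fx|move: Fy]; rewrite rcons_cons -cat1s; apply: factor_catr.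
  apply: (@core s _ c _ Hb Hw Fd); first by rewrite size_rcons.
  by rewrite occ_neq // /occ /= eqxx.
move=> [x [y [Hxy [Fx Fy]]]].
case/lastP: w Hw Hne Fx Fy => [//|w' c] Hw _ Fx Fy; rewrite last_rcons.
have [d [Hdc Hd]] := @other x y c Hxy.
have Fd : factor s (d :: w').
  by case: Hd => ->; [move: Fx|move: Fy]; rewrite -rcons_cons -cats1; apply: factor_catl.
apply: (@core s _ c _ Hb Hw Fd); first by rewrite size_rcons.
by rewrite occ_neq' // /occ -cats1 count_cat /= eqxx addn1.
Qed.
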